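(* Let $n\ge3$, let $e_1,\dots,e_n\ge1$ be integers with $E=e_1e_2\cdots e_n\ge2$, let $c=\max\{e_1,\dots,e_n\}$, and let $R$ be a commutative unital ring in which $c!$ is invertible. Then for all distinct $i,j\in\{1,\dots,n\}$, all integers $m\ge0$ and all $r\in R$, the group $G_{R,n;e_1,\dots,e_n}$ contains $\alpha_{i;j}^{(t)}(r)$ where $t=t_{i,j}+m(E-1)$ and $t_{i,j}=e_ie_{i+1}\cdots e_{j-1}$ (indices ordered cyclically and taken modulo $n$). Consequently, for every polynomial $P\in R[y]$ and distinct $i,j$, $G_{R,n;e_1,\dots,e_n}$ contains the automorphism with $x_i\mapsto x_i+x_j^{t_{i,j}}P(x_j^{E-1})$ and $x_\ell\mapsto x_\ell$ for $\ell\ne i$.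
   Context: For distinct $i,j$, $e\ge0$, $r\in R$: $\alpha_{i;j}^{(e)}(r)\in\mathrm{Aut}(R[x_1,\dots,x_n])$ maps $x_i\mapsto x_i+rx_j^e$ and fixes $x_\ell$ for $\ell\ne i$. $G_{R,n;e_1,\dots,e_n}$ is the subgroup generated by $\{\alpha_{i;i+1}^{(e_i)}(r): 1\le i\le n, r\in R\}$, indices modulo $n$. The product $t_{i,j}$ runs cyclically from $e_i$ to $e_{j-1}$, e.g. $t_{i,i+1}=e_i$ and $t_{n,2}=e_ne_1$. *)

(* Defs.v *)
From HB Require Import structures.
From mathcomp Require Import all_boot all_order all_algebra.
From mathcomp Require Export mpoly.
Set Implicit Arguments. Unset Strict Implicit. Unset Printing Implicit Defensive.
Import GRing.Theory.
Local Open Scope ring_scope.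

(* An R-algebra endomorphism of R[x_0,...,x_{n-1}] is represented by the
   n-tuple of the images of the variables; it acts on p by p \mPo phi. *)
Definition endo (R : comNzRingType) (n : nat) := n.-tuple {mpoly R[n]}.

Definition endo_id (R : comNzRingType) (n : nat) : endo R n :=
  [tuple 'X_i | i < n].

(* composition: (endo_comp f g) = f o g, i.e. x_i |-> f (g (x_i)) *)
Definition endo_comp (R : comNzRingType) (n : nat) (f g : endo R n) : endo R n :=
  [tuple (tnth g i \mPo f) | i < n].

Definition alpha (R : comNzRingType) (n : nat) (i j : 'I_n) (e : nat) (r : R)
  : endo R n :=
  [tuple (if l == i then 'X_i + r *: 'X_j ^+ e else 'X_l) | l < n].

Definition succI (n : nat) (i : 'I_n) : 'I_n := ordS i.

(* G_{R,n;e}: the subgroup of Aut(R[x]) generated by the alpha_{i;i+1}^{(e_i)}(r),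
   defined as the smallest set of endomorphisms containing the identity and the
   generators, closed under composition and under taking two-sided inverses. *)
Inductive inG (R : comNzRingType) (n : nat) (e : 'I_n -> nat) : endo R n -> Prop :=
  | inG_id : inG e (endo_id R n)
  | inG_gen (i : 'I_n) (r : R) : inG e (alpha i (succI i) (e i) r)
  | inG_comp f g : inG e f -> inG e g -> inG e (endo_comp f g)
  | inG_inv f g : inG e f -> endo_comp f g = endo_id R n ->
                  endo_comp g f = endo_id R n -> inG e g.

(* t_{i,j} = e_i e_{i+1} ... e_{j-1}, indices cyclic modulo n *)
Definition tij (n : nat) (e : 'I_n -> nat) (i j : 'I_n) : nat :=
  \prod_(k < (j + n - i) %% n) e (iter k (@succI n) i).

(* Main.v *)
Require Import Defs.
From HB Require Import structures.
From mathcomp Require Import all_boot all_order all_algebra.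
From mathcomp Require Import mpoly.
From mathcomp Require Import zify.
Set Implicit Arguments. Unset Strict Implicit. Unset Printing Implicit Defensive.
Import GRing.Theory.
Local Open Scope ring_scope.

Section Gen.
Variable (R : comNzRingType) (n : nat).
Local Notation A := {mpoly R[n]}.

Lemma compX (l : 'I_n) (t : n.-tuple A) : 'X_l \mPo t = tnth t l.
Proof. by rewrite comp_mpolyXU (tnth_nth 0). Qed.

Lemma comp_assoc (p : A) (f g : endo R n) :
  (p \mPo g) \mPo f = p \mPo (endo_comp f g).
Proof.
rewrite [p \mPo g]comp_mpolyEX [RHS]comp_mpolyEX raddf_sum /=; apply: eq_bigr => m _.
rewrite comp_mpolyZ !comp_mpolyX rmorph_prod /=; congr (_ *: _).
by apply: eq_bigr => l _; rewrite rmorphXn /= tnth_mktuple.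
Qed.

Definition T (i : 'I_n) (f : A) : endo R n :=
  [tuple (if l == i then 'X_i + f else 'X_l) | l < n].

Lemma tnthT i f l : tnth (T i f) l = if l == i then 'X_i + f else 'X_l.
Proof. by rewrite tnth_mktuple. Qed.

Definition noX (i : 'I_n) (h : A) := forall t t' : n.-tuple A,
  (forall l, l != i -> tnth t l = tnth t' l) -> h \mPo t = h \mPo t'.

Lemma noX_id i h f : noX i h -> h \mPo T i f = h.
Proof.
move=> H; rewrite -[RHS](comp_mpoly_id h); apply: H => l ne.
by rewrite tnthT (negbTE ne) tnth_mktuple.
Qed.

Lemma Tcomp i f g : noX i g -> endo_comp (T i f) (T i g) = T i (f + g).
Proof.
move=> Hg; apply: eq_from_tnth => l; rewrite tnth_mktuple !tnthT.
case: ifP => [/eqP Eli|ne]; [subst l|].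
  by rewrite comp_mpolyD compX tnthT eqxx noX_id // addrA.
by rewrite compX tnthT ne.
Qed.

Lemma T0 i : T i 0 = endo_id R n.
Proof.
apply: eq_from_tnth => l; rewrite tnthT tnth_mktuple addr0.
by case: eqP => [->|].
Qed.

Lemma noX_X i l : l != i -> noX i 'X_l.
Proof. by move=> ne t t' H; rewrite !compX H. Qed.
Lemma noX_C i c : noX i c%:MP.
Proof. by move=> t t' _; rewrite !comp_mpolyC. Qed.
Lemma noX_add i f g : noX i f -> noX i g -> noX i (f + g).
Proof. by move=> Hf Hg t t' H; rewrite !comp_mpolyD (Hf t t') // (Hg t t'). Qed.
Lemma noX_mul i f g : noX i f -> noX i g -> noX i (f * g).
Proof. by move=> Hf Hg t t' H; rewrite !rmorphM /= (Hf t t') // (Hg t t'). Qed.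
Lemma noX_opp i f : noX i f -> noX i (- f).
Proof. by move=> Hf t t' H; rewrite !comp_mpolyN (Hf t t'). Qed.
Lemma noX_Z i a f : noX i f -> noX i (a *: f).
Proof. by move=> Hf t t' H; rewrite !comp_mpolyZ (Hf t t'). Qed.
Lemma noX_exp i f k : noX i f -> noX i (f ^+ k).
Proof. by move=> Hf t t' H; rewrite !rmorphXn /= (Hf t t'). Qed.
Lemma noX_0 i : noX i 0.
Proof. by move=> t t' _; rewrite !comp_mpoly0. Qed.
Lemma noX_1 i : noX i 1.
Proof. by move=> t t' _; rewrite !comp_mpoly1. Qed.

Lemma noX_comp i l h g : l != i -> noX i h -> noX i g -> noX i (h \mPo T l g).
Proof.
move=> ne Hh Hg t t' E; rewrite !comp_assoc; apply: Hh => m nm.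
rewrite !tnth_mktuple; case: ifP => [/eqP Eml|_]; [subst m|].
  by rewrite !comp_mpolyD !compX (E l ne) (Hg t t').
by rewrite !compX E.
Qed.


Variable e : 'I_n -> nat.
Local Notation G := (inG e).

Lemma inG_add i f g : G (T i f) -> G (T i g) -> noX i g -> G (T i (f + g)).
Proof. by move=> Hf Hg ng; rewrite -Tcomp //; apply: inG_comp. Qed.

Lemma inG_neg i f : noX i f -> G (T i f) -> G (T i (- f)).
Proof.
move=> nf Gf; apply: (inG_inv Gf).
  by rewrite Tcomp ?subrr ?T0 //; apply: noX_opp.
by rewrite Tcomp // addNr T0.
Qed.

Lemma inG_conj i l h g : l != i -> noX i g -> noX l g -> noX i h ->
  G (T l g) -> G (T i h) -> G (T i (h \mPo T l g)).
Proof.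
move=> ne ng nlg nh Gg Gh.
have Gn : G (T l (- g)) by apply: inG_neg.
have -> : T i (h \mPo T l g) = endo_comp (T l g) (endo_comp (T i h) (T l (- g))).
  apply: eq_from_tnth => m; rewrite !tnth_mktuple.
  have nil : (i == l) = false by rewrite eq_sym (negbTE ne).
  case: (eqVneq m i) => [Emi|nmi].
    subst m; rewrite nil.
    by rewrite compX tnthT eqxx comp_mpolyD compX tnthT nil.
  case: (eqVneq m l) => [Eml|nml].
    subst m; rewrite comp_mpolyD compX tnthT (negbTE nmi).
    rewrite (noX_id _ (noX_opp ng)) comp_mpolyD compX tnthT eqxx.
    by rewrite (noX_id _ (noX_opp nlg)) addrK.
  by rewrite compX tnthT (negbTE nmi) compX tnthT (negbTE nml).
by apply: inG_comp => //; apply: inG_comp.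
Qed.

Definition Hg i h := noX i h /\ forall r : R, G (T i (r *: h)).

Lemma Hg0 i : Hg i 0.
Proof. split; first exact: noX_0. by move=> r; rewrite scaler0 T0; apply: inG_id. Qed.

Lemma HgD i f g : Hg i f -> Hg i g -> Hg i (f + g).
Proof.
move=> [nf Gf] [ng Gg]; split; first exact: noX_add.
by move=> r; rewrite scalerDr; apply: inG_add => //; apply: noX_Z.
Qed.

Lemma HgZ i a f : Hg i f -> Hg i (a *: f).
Proof.
move=> [nf Gf]; split; first exact: noX_Z.
by move=> r; rewrite scalerA.
Qed.

Lemma Hg_sum i (I : Type) (s : seq I) (F : I -> A) :
  (forall k, Hg i (F k)) -> Hg i (\sum_(k <- s) F k).
Proof. by move=> H; apply: (big_ind (Hg i)) => //; [exact: Hg0| exact: HgD]. Qed.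

Lemma Hg_subst i l h g : l != i -> noX i g -> noX l g ->
  (forall s, G (T l (s *: g))) -> Hg i h -> forall s, Hg i (h \mPo T l (s *: g)).
Proof.
move=> ne ng nlg Gg [nh Gh] s; split; first by apply: noX_comp => //; apply: noX_Z.
move=> r; rewrite -comp_mpolyZ; apply: inG_conj => //; try apply: noX_Z => //.
Qed.

Definition invb (x : R) := exists y, y * x = 1.

Lemma invbM x y : invb x -> invb y -> invb (x * y).
Proof. by move=> [a Ha] [b Hb]; exists (a * b); rewrite mulrACA Ha Hb mul1r. Qed.

Lemma invb_dvd N m : invb N%:R -> (m %| N)%N -> invb m%:R.
Proof.
move=> [y Hy] /dvdnP [q Eq]; exists (y * q%:R).
by rewrite -mulrA -natrM -Eq.
Qed.

Lemma fact_dvd d c : (d <= c)%N -> (d`! %| c`!)%N.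
Proof.
elim: c => [|c IH]; first by rewrite leqn0 => /eqP ->.
rewrite leq_eqVlt => /orP [/eqP ->|]; first exact: dvdnn.
by rewrite ltnS => /IH H; rewrite factS dvdn_mull.
Qed.

Lemma extract (P : A -> Prop) (P0 : P 0)
  (PD : forall x y, P x -> P y -> P (x + y)) (PZ : forall a x, P x -> P (a *: x))
  (d : nat) (Hd : forall k, (0 < k)%N -> (k <= d)%N -> invb k%:R)
  (q : 'I_d.+1 -> A) :
  (forall s : R, P (\sum_(k < d.+1) s ^+ k *: q k)) -> forall k, P (q k).
Proof.
move=> HP k.
pose a : 'rV[R]_d.+1 := \row_(j < d.+1) (j%:R : R).
pose V := Vandermonde d.+1 a.
have Hdet : invb (\det V).
  rewrite det_Vandermonde.
  apply: (big_ind invb); [by exists 1; rewrite mulr1| exact: invbM|] => i _.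
  apply: (big_ind invb); [by exists 1; rewrite mulr1| exact: invbM|] => j lij.
  rewrite !mxE -natrB 1?ltnW //; apply: Hd; first by rewrite subn_gt0.
  by rewrite leq_subLR -ltnS (leq_trans (ltn_ord j)) // ltnS leq_addl.
have Psum : forall (I : Type) (s : seq I) (F : I -> A), (forall i, P (F i)) -> P (\sum_(i <- s) F i).
  by move=> I s F HF; apply: (big_ind P).
have key : \det V *: q k = \sum_(j < d.+1) (\adj V) j k *: (\sum_(l < d.+1) (a 0 j) ^+ l *: q l).
  transitivity (\sum_(l < d.+1) (V *m \adj V) l k *: q l).
    rewrite mul_mx_adj (bigD1 k) //= big1 ?addr0; first by rewrite !mxE eqxx mulr1n.
    by move=> l nlk; rewrite !mxE (negbTE nlk) mulr0n scale0r.
  rewrite (eq_bigr (fun l => \sum_(j < d.+1) (V l j * \adj V j k) *: q l)); last first.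
    by move=> l _; rewrite !mxE scaler_suml.
  rewrite exchange_big /=; apply: eq_bigr => j _; rewrite scaler_sumr.
  by apply: eq_bigr => l _; rewrite scalerA mulrC !mxE.
have [y Hy] := Hdet.
have -> : q k = y *: (\det V *: q k) by rewrite scalerA Hy scale1r.
by apply: (PZ); rewrite key; apply: (Psum) => j; apply: (PZ).
Qed.


Lemma push i l (g N0 : A) (d c : nat) : l != i -> noX i g -> noX l g -> noX l N0 ->
  (forall s, G (T l (s *: g))) -> invb (c`!)%:R -> (d <= c)%N ->
  Hg i ('X_l ^+ d * N0) ->
  forall k, (k <= d)%N -> Hg i ('X_l ^+ (d - k) * g ^+ k * N0).
Proof.
move=> ne ng nlg nN0 Gg Hc ledc Hh k lek.
have Hd : forall k, (0 < k)%N -> (k <= d)%N -> invb k%:R.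
  move=> k0 k0p k0d; apply: (invb_dvd Hc); apply: dvdn_fact.
  by rewrite k0p (leq_trans k0d).
have HS : forall s, Hg i (\sum_(k0 < d.+1) s ^+ k0 *:
                       ('X_l ^+ (d - k0) * g ^+ k0 * N0 *+ 'C(d, k0))).
  move=> s; have := Hg_subst ne ng nlg Gg Hh s.
  rewrite rmorphM /= rmorphXn /= compX tnthT eqxx (noX_id _ nN0) exprDn mulr_suml.
  congr Hg; apply: eq_bigr => k0 _.
  by rewrite exprZn mulrnAl -scalerAr -scalerAl scalerMnr.
have := extract (@Hg0 i) (@HgD i) (@HgZ i) Hd HS (Ordinal (n:=d.+1) (m:=k) lek).
rewrite /=.
have [y Hy] : invb ('C(d, k))%:R.
  apply: (invb_dvd Hc); apply: (dvdn_trans _ (fact_dvd ledc)).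
  by rewrite -(bin_fact lek) dvdn_mulr.
move=> /(HgZ y); rewrite -scaler_nat scalerA Hy scale1r //.
Qed.

End Gen.
Local Open Scope nat_scope.
Section Idx.
Variable (n : nat) (e : 'I_n -> nat).

Definition Dn (i j : 'I_n) : nat := (j + n - i) %% n.

Lemma Dform (i j : 'I_n) : Dn i j = if (i <= j)%N then j - i else j + n - i.
Proof.
have hi := ltn_ord i; have hj := ltn_ord j.
rewrite /Dn; case: leqP => h.
  have -> : (j + n - i = (j - i) + n)%N by lia.
  by rewrite modnDr modn_small //; lia.
by rewrite modn_small //; lia.
Qed.

Lemma succv (i : 'I_n) : nat_of_ord (succI i) = if (i.+1 < n)%N then i.+1 else 0%N.
Proof.
have hi := ltn_ord i; rewrite /succI /=; case: ltnP => h; first by rewrite modn_small.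
have E1 : i.+1 = n by lia. 
by rewrite E1 modnn.
Qed.

Lemma Dsucc (i j : 'I_n) : i != j -> Dn (succI i) j = (Dn i j).-1.
Proof.
move=> /eqP ne; have ne' : nat_of_ord i <> nat_of_ord j by move=> h; apply: ne; apply: val_inj.
have hi := ltn_ord i; have hj := ltn_ord j.
rewrite !Dform succv; case: (ltnP i.+1 n) => h /=; repeat (case: ifP => ?); lia.
Qed.

Lemma Dpos (i j : 'I_n) : i != j -> (0 < Dn i j)%N.
Proof.
move=> /eqP ne; have ne' : nat_of_ord i <> nat_of_ord j by move=> h; apply: ne; apply: val_inj.
have hi := ltn_ord i; have hj := ltn_ord j.
rewrite !Dform; case: ifP => ?; lia.
Qed.

Lemma Dlt (i j : 'I_n) : i != j -> (Dn (succI i) j < Dn i j)%N.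
Proof. by move=> ne; rewrite Dsucc // prednK ?leqnn // Dpos. Qed.

Lemma Dnext (i : 'I_n) : (1 < n)%N -> Dn i (succI i) = 1%N.
Proof.
move=> n1; have hi := ltn_ord i.
rewrite !Dform succv; case: (ltnP i.+1 n) => h /=; repeat (case: ifP => ?); lia.
Qed.

Lemma Dprev (j : 'I_n) : (1 < n)%N -> Dn (succI j) j = n.-1.
Proof.
move=> n1; have hi := ltn_ord j.
rewrite !Dform succv; case: (ltnP j.+1 n) => h /=; repeat (case: ifP => ?); lia.
Qed.

Lemma tij_one (i : 'I_n) : (1 < n)%N -> tij e i (succI i) = e i.
Proof.
move=> n1; rewrite /tij -/(Dn i (succI i)) Dnext //.
by rewrite big_ord_recl big_ord0 muln1.
Qed.

Lemma tij_step (i j : 'I_n) : i != j -> succI i != j ->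
  tij e i j = (e i * tij e (succI i) j)%N.
Proof.
move=> ne ne2; rewrite /tij -/(Dn i j) -/(Dn (succI i) j).
rewrite -[Dn i j](prednK (Dpos ne)) -Dsucc // big_ord_recl /=.
congr (_ * _)%N; apply: eq_bigr => k _; by rewrite add0n -iterS iterSr.
Qed.

Lemma iter_val (j : 'I_n) k : nat_of_ord (iter k (@succI n) j) = ((j + k) %% n)%N.
Proof.
elim: k => [|k IH]; first by rewrite addn0 modn_small.
by rewrite iterS /succI /= IH -addn1 modnDml addn1 addnS.
Qed.

Lemma tij_full (j : 'I_n) : (1 < n)%N -> (tij e (succI j) j * e j = \prod_(k < n) e k)%N.
Proof.
move=> n1; rewrite /tij -/(Dn (succI j) j) Dprev // mulnC.
have -> : (\prod_(k < n) e k = \prod_(k < n) e (iter k (@succI n) j))%N.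
  apply: (reindex_inj (h := fun k : 'I_n => iter k (@succI n) j)).
  move=> k1 k2 /(congr1 val) /=; rewrite !iter_val => /eqP.
  rewrite eqn_modDl !modn_small // => /eqP h; exact: val_inj.
rewrite -(big_mkord xpredT (fun k => e (iter k (@succI n) j))).
rewrite -(big_mkord xpredT (fun k => e (iter k (@succI n) (succI j)))).
have HH : forall N (F : nat -> nat), N.+1 = n ->
    (\prod_(0 <= k < n) F k = F 0%N * \prod_(0 <= k < N) F k.+1)%N.
  by move=> N F <-; rewrite big_nat_recl.
rewrite (HH n.-1 _ (prednK (ltnW n1))) /=.
by congr (_ * _)%N; apply: eq_bigr => k _; rewrite -iterS iterSr.
Qed.

End Idx.

Local Open Scope ring_scope.

Lemma succ_neq (n : nat) (i : 'I_n) : (1 < n)%N -> succI i != i.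
Proof.
move=> n1; apply/eqP => /(congr1 (@nat_of_ord n)); rewrite succv /=; have := ltn_ord i.
case: (ltnP i.+1 n) => h /=; lia.
Qed.

Lemma succ2_neq (n : nat) (i : 'I_n) : (2 < n)%N -> succI (succI i) != i.
Proof.
move=> n2; apply/eqP => /(congr1 (@nat_of_ord n)); rewrite !succv /=; have := ltn_ord i.
case: (ltnP i.+1 n) => h /=; repeat (case: ifP => ?); lia.
Qed.

Section Main.
Variable (R : comNzRingType) (n : nat) (e : 'I_n -> nat).
Hypothesis hn3 : (3 <= n)%N.
Hypothesis he : forall k, (1 <= e k)%N.
Hypothesis hE : (2 <= \prod_(k < n) e k)%N.
Hypothesis Hc : @invb R ((\max_(k < n) e k)`!)%:R.

Local Notation E := (\prod_(k < n) e k).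
Local Notation c := (\max_(k < n) e k).
Local Notation G := (inG e).

Definition Lv m (i j : 'I_n) := forall r : R,
  G (T i (r *: 'X_j ^+ (tij e i j + m * (E - 1)))).

Lemma ele k : (e k <= c)%N.
Proof. exact: leq_bigmax. Qed.

Lemma n1 : (1 < n)%N. Proof. by apply: leq_trans hn3. Qed.

Lemma Hg_gen (i : 'I_n) : Hg e i ('X_(succI i) ^+ e i * 1 : {mpoly R[n]}).
Proof.
rewrite mulr1; split; first by apply: noX_exp; apply: noX_X; apply: succ_neq n1.
by move=> r; apply: (inG_gen e i r).
Qed.

Lemma BS m (i j : 'I_n) : i != j -> succI i != j ->
  Lv 0 (succI i) j -> Lv m (succI i) j -> Lv m i j.
Proof.
move=> nij nkj L0 Lm.
set k := succI i in nkj L0 Lm *.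
have nki : k != i by apply: succ_neq n1.
have nji : j != i by rewrite eq_sym.
have njk : j != k by rewrite eq_sym.
set t := tij e k j.
have G0 : forall r : R, G (T k (r *: 'X_j ^+ t)).
  by move=> r; have := L0 r; rewrite mul0n addn0.
set g1 : {mpoly R[n]} := 'X_j ^+ (t + m * (E - 1)).
set g0 : {mpoly R[n]} := 'X_j ^+ t.
have h1 := @push R n e i k g1 1 (e i) c nki (noX_exp _ (noX_X nji))
   (noX_exp _ (noX_X njk)) (@noX_1 R n k) Lm Hc (ele i) (Hg_gen i) 1 (he i).
rewrite mulr1 expr1 in h1.
have h2 := @push R n e i k g0 g1 (e i - 1) c nki (noX_exp _ (noX_X nji))
   (noX_exp _ (noX_X njk)) (noX_exp _ (noX_X njk)) G0 Hc
   (leq_trans (leq_subr _ _) (ele i)) h1 (e i - 1) (leqnn _).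
rewrite subnn expr0 mul1r /g0 /g1 -exprM -exprD in h2.
move=> r; case: h2 => _ /(_ r); congr (G (T i (r *: 'X_j ^+ _))).
rewrite (tij_step e nij nkj) -/t; have := he i; nia.
Qed.

Lemma FS m (i : 'I_n) :
  Lv 0 (succI (succI i)) (succI i) -> Lv m (succI (succI i)) (succI i) ->
  Lv m.+1 i (succI i).
Proof.
set j := succI i; set l := succI j => L0 Lm.
have nji : j != i by apply: succ_neq n1.
have nlj : l != j by apply: succ_neq n1.
have nli : l != i by apply: succ2_neq.
have njl : j != l by rewrite eq_sym.
set t := tij e l j.
have G0 : forall r : R, G (T l (r *: 'X_j ^+ t)).
  by move=> r; have := L0 r; rewrite mul0n addn0.
set g1 : {mpoly R[n]} := 'X_j ^+ (t + m * (E - 1)).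
set g0 : {mpoly R[n]} := 'X_j ^+ t.
have h1 := @push R n e i j ('X_l ^+ e j) 1 (e i) c nji (noX_exp _ (noX_X nli))
   (noX_exp _ (noX_X nlj)) (@noX_1 R n j) (fun s => inG_gen e j s) Hc (ele i) (Hg_gen i) 1 (he i).
rewrite mulr1 expr1 mulrC in h1.
have h2 := @push R n e i l g1 ('X_j ^+ (e i - 1)) (e j) c nli (noX_exp _ (noX_X nji))
   (noX_exp _ (noX_X njl)) (noX_exp _ (noX_X njl)) Lm Hc (ele j) h1 1 (he j).
rewrite expr1 -mulrA in h2.
have h3 := @push R n e i l g0 (g1 * 'X_j ^+ (e i - 1)) (e j - 1) c nli (noX_exp _ (noX_X nji))
   (noX_exp _ (noX_X njl)) (noX_mul (noX_exp _ (noX_X njl)) (noX_exp _ (noX_X njl))) G0 Hc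
   (leq_trans (leq_subr _ _) (ele j)) h2 (e j - 1) (leqnn _).
rewrite subnn expr0 mul1r /g0 /g1 -exprM -!exprD in h3.
move=> r; case: h3 => _ /(_ r); congr (G (T i (r *: 'X_j ^+ _))).
rewrite (tij_one e i n1).
have := tij_full e j n1; rewrite -/l -/t => HT.
have tE : (t <= E)%N by rewrite -HT leq_pmulr. 
rewrite mulnBr muln1 HT mulSn; have := he i; have := hE; move: tE; set P := (\prod_(k < n) e k)%N; set M := (m * (P - 1))%N. lia.
Qed.


Lemma allLv (j : 'I_n) : forall m i, i != j -> Lv m i j.
Proof.
have Q0 : forall i, i != j -> Lv 0 i j.
  suff H : forall D i, i != j -> (Dn i j <= D)%N -> Lv 0 i j.
    by move=> i ne; apply: (H _ i ne (leqnn _)).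
  elim=> [|D IH] i ne hD.
    by have := Dpos ne; rewrite leqNgt; move: hD; rewrite leqn0 => /eqP ->.
  case: (eqVneq (succI i) j) => [Ej|nj].
    subst j => r; rewrite (tij_one e i n1) mul0n addn0; exact: inG_gen.
  apply: BS => //; apply: IH => //; have := Dlt ne; lia.
elim=> [|m IHm] i ne; first exact: Q0.
suff H : forall D i, i != j -> (Dn i j <= D)%N -> Lv m.+1 i j.
  by apply: (H _ i ne (leqnn _)).
elim=> [|D IH] {ne} i ne hD.
  by have := Dpos ne; rewrite leqNgt; move: hD; rewrite leqn0 => /eqP ->.
case: (eqVneq (succI i) j) => [Ej|nj].
  subst j; apply: FS; [apply: Q0|apply: IHm]; exact: succ_neq n1.
apply: BS => //; [apply: Q0 | apply: IH] => //; have := Dlt ne; lia.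
Qed.

End Main.


Theorem mainTheorem9 (R : comNzRingType) (n : nat) (e : 'I_n -> nat) :
  (3 <= n)%N ->
  (forall k, 1 <= e k)%N ->
  (2 <= \prod_(k < n) e k)%N ->
  (exists u : R, u * ((\max_(k < n) e k)`!)%:R = 1) ->
  (forall (i j : 'I_n), i != j -> forall (m : nat) (r : R),
     inG e (alpha i j (tij e i j + m * (\prod_(k < n) e k - 1)) r))
  /\
  (forall (P : {poly R}) (i j : 'I_n), i != j ->
     inG e [tuple (if l == i then
                     'X_i + 'X_j ^+ (tij e i j)
                            * (map_poly (@mpolyC n R) P).['X_j ^+ (\prod_(k < n) e k - 1)]
                   else 'X_l) | l < n]).
Proof.
move=> hn3 he hE [u Hu].
have Hc : @invb R ((\max_(k < n) e k)`!)%:R by exists u.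
have L := allLv hn3 he hE Hc.
split; first by move=> i j ne m r; exact: (L j m i ne r).
move=> P i j ne.
have nji : j != i by rewrite eq_sym.
have HF : Hg e i ('X_j ^+ tij e i j *
    (map_poly (@mpolyC n R) P).['X_j ^+ (\prod_(k < n) e k - 1)]).
  rewrite horner_coef mulr_sumr; apply: Hg_sum => k.
  rewrite coef_map /= mul_mpolyC -scalerAr -exprM -exprD; apply: HgZ; split.
    by apply: noX_exp; apply: noX_X.
  by move=> r; have := L j k i ne r; rewrite mulnC.
by case: HF => _ /(_ 1); rewrite scale1r.
Qed.
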